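(* Let $G$ be a finitely generated group with $G=G^0\times\langle x\rangle$, where $\langle x\rangle$ is infinite cyclic. Then for every $n\geq1$ the number of conjugacy classes of subgroups of index $n$ in $G$ equals the number of pairs $(\mathcal{O},[W])$ where $\mathcal{O}$ runs over isomorphism classes of finite transitive $G^0$-sets with $|\mathcal{O}|$ dividing $n$ and $[W]$ runs over isomorphism classes of irreducible complex representations of $\mathrm{Aut}_{G^0}(\mathcal{O})$.
   Context: $\mathrm{Aut}_{G^0}(\mathcal{O})$ denotes the group of $G^0$-equivariant bijections of the $G^0$-set $\mathcal{O}$. *)

(* Defs.v *)
From HB Require Import structures.
From mathcomp Require Import all_boot all_order all_algebra all_fingroup.
From mathcomp Require Import all_field all_character.
From mathcomp Require Import boolp.
From Stdlib Require Import List.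

Set Implicit Arguments.
Unset Strict Implicit.
Unset Printing Implicit Defensive.

Record Grp := {
  gcar :> Type;
  gmul : gcar -> gcar -> gcar;
  gone : gcar;
  ginv : gcar -> gcar;
  gmulA : forall a b c, gmul a (gmul b c) = gmul (gmul a b) c;
  gmul1 : forall a, gmul gone a = a;
  gmulV : forall a, gmul (ginv a) a = gone
}.

Section GroupDefs.
Variable G : Grp.
Local Notation "a * b" := (gmul a b).
Local Notation "1" := (gone G).

Definition gpow (x : G) (k : int) : G :=
  match k with
  | Posz n => iter n (gmul x) 1
  | Negz n => ginv (iter n.+1 (gmul x) 1)
  end.

Definition is_subgroup (H : G -> Prop) : Prop :=
  H 1 /\ (forall a b, H a -> H b -> H (a * b)) /\ (forall a, H a -> H (ginv a)).

Inductive generated (S : list G) : G -> Prop :=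
  | gen_one : generated S 1
  | gen_in s : List.In s S -> generated S s
  | gen_mul a b : generated S a -> generated S b -> generated S (a * b)
  | gen_inv a : generated S a -> generated S (ginv a).

Definition finitely_generated : Prop :=
  exists S : list G, forall g, generated S g.

(* G = G0 x <x> (internal direct product) with <x> infinite cyclic:
   G0 is a subgroup, x centralises G0, and every element of G is written
   uniquely as h * x^k with h in G0, k in Z (uniqueness for h = 1 gives
   that <x> is infinite cyclic and meets G0 trivially). *)
Definition direct_prod_infcyclic (G0 : G -> Prop) (x : G) : Prop :=
  is_subgroup G0 /\
  (forall h, G0 h -> h * x = x * h) /\
  (forall g, exists h k, G0 h /\ g = h * gpow x k) /\
  (forall h h' k k', G0 h -> G0 h' -> h * gpow x k = h' * gpow x k' ->
       h = h' /\ k = k').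

(* H has index n in G: there are exactly n left cosets t_i H. *)
Definition has_index (H : G -> Prop) (n : nat) : Prop :=
  exists t : 'I_n -> G, forall g, exists! i, H (ginv (t i) * g).

Definition conj_subgroups (H K : G -> Prop) : Prop :=
  exists g, forall h, H h <-> K (g * h * ginv g).

Variable G0 : G -> Prop.

(* A finite G0-set: a finite type with an action of the elements of G0
   (values of act on elements outside G0 are irrelevant and unconstrained). *)
Record GSet := {
  gs_car : finType;
  gs_act : G -> gs_car -> gs_car;
  gs_act1 : forall o, gs_act 1 o = o;
  gs_actM : forall g h o, G0 g -> G0 h -> gs_act (g * h) o = gs_act g (gs_act h o)
}.


Arguments gs_act : clear implicits.
Arguments gs_car : clear implicits.
Definition gset_transitive (X : GSet) : Prop :=
  0 < #|gs_car X| /\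
  forall o o' : gs_car X, exists g, G0 g /\ gs_act X g o = o'.

Definition gset_iso (X Y : GSet) : Prop :=
  exists f : gs_car X -> gs_car Y, bijective f /\
    forall g o, G0 g -> f (gs_act X g o) = gs_act Y g (f o).

Definition aut_set (X : GSet) : {set {perm gs_car X}} :=
  [set p : {perm gs_car X} |
     `[< forall g o, G0 g -> p (gs_act X g o) = gs_act X g (p o) >] ].

Lemma aut_group_set (X : GSet) : group_set (aut_set X).
Proof.
apply/group_setP; split.
  by rewrite inE; apply/asboolP => g o _; rewrite !perm1.
move=> p q; rewrite !inE => /asboolP Hp /asboolP Hq; apply/asboolP => g o Hg.
by rewrite !permM Hp // Hq.
Qed.

Canonical aut_group (X : GSet) := Group (aut_group_set X).

End GroupDefs.

Definition class_reps {A : Type} (P : A -> Prop) (R : A -> A -> Prop)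
  (s : list A) : Prop :=
  Forall P s /\ ForallOrdPairs (fun a b => ~ R a b) s /\
  (forall a, P a -> Exists (R a) s).

Definition num_classes {A : Type} (P : A -> Prop) (R : A -> A -> Prop)
  (N : nat) : Prop :=
  exists s, class_reps P R s /\ length s = N.

Definition num_irr_reps (gT : finGroupType) (A : {group gT}) (N : nat) : Prop :=
  num_classes
    (fun r : {d : nat & mx_representation algC A d} => mx_irreducible (projT2 r))
    (fun r r' => mx_rsim (projT2 r) (projT2 r'))
    N.

Definition num_conj_classes_index (G : Grp) (n N : nat) : Prop :=
  num_classes (fun H : G -> Prop => is_subgroup H /\ has_index H n)
              (@conj_subgroups G) N.

Definition num_pairs (G : Grp) (G0 : G -> Prop) (n N : nat) : Prop :=
  exists (Os : list (GSet G0)) (ks : list nat),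
    class_reps (fun X => gset_transitive X /\ (#|gs_car X| %| n)%N)
               (@gset_iso G G0) Os /\
    Forall2 (fun X k => num_irr_reps (aut_group X) k) Os ks /\
    sumn ks = N.

(* Main.v *)
Require Import Defs.
From HB Require Import structures.
From mathcomp Require Import all_boot all_order all_algebra all_fingroup.
From mathcomp Require Import all_field all_character.
From mathcomp Require Import boolp.
From Stdlib Require Import List.
Set Implicit Arguments. Unset Strict Implicit. Unset Printing Implicit Defensive.
From Stdlib Require Classical_Prop.
From mathcomp Require Import zify ring lra.
Import Order.TTheory GRing.Theory Num.Theory.
Lemma size_length (T : Type) (s : list T) : size s = length s.
Proof. by elim: s => //= a s ->. Qed.

Lemma In_mem (T : eqType) (x : T) (s : list T) : List.In x s <-> x \in s.
Proof.
elim: s => //= a s IH; rewrite inE; split.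
  by case=> [->|/IH ->]; rewrite ?eqxx ?orbT.
by case/orP=> [/eqP->|/IH]; [left|right].
Qed.

Lemma class_reps_map (I : eqType) (A : Type) (P : A -> Prop) (R : A -> A -> Prop)
  (l : list I) (f : I -> A) :
  uniq l ->
  (forall i, i \in l -> P (f i)) ->
  (forall i j, i \in l -> j \in l -> R (f i) (f j) -> i = j) ->
  (forall a, P a -> exists2 i, i \in l & R a (f i)) ->
  class_reps P R (map f l).
Proof.
move=> Ul HP Hinj Hcov; split; [|split].
- apply/Forall_forall => a /in_map_iff [i [<- /In_mem]]; exact: HP.
- elim: l Ul HP Hinj {Hcov} => [|i l IH] /=; first by constructor.
  case/andP=> il Ul HP Hinj; constructor.
    apply/Forall_forall => a /in_map_iff [j [<- /In_mem jl]] Rij.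
    have := Hinj i j; rewrite mem_head inE jl orbT => /(_ isT isT Rij) eij.
    by rewrite eij jl in il.
  apply: IH => // [i' i'l|i' j i'l jl]; first by apply: HP; rewrite inE i'l orbT.
  by apply: Hinj; rewrite inE ?i'l ?jl orbT.
- move=> a /Hcov [i il Rai]; apply/Exists_exists; exists (f i); split => //.
  by apply/in_map_iff; exists i; split => //; apply/In_mem.
Qed.

Lemma class_reps_exist (A : Type) (P : A -> Prop) (R : A -> A -> Prop) (L : list A) :
  (forall a, R a a) -> (forall a b c, R a b -> R b c -> R a c) ->
  (forall a, P a -> exists b, List.In b L /\ P b /\ R a b) ->
  exists s, class_reps P R s.
Proof.
move=> Rrefl Rtr Hcov.
suff [s [Ps [Ds Cs]]] : exists s, Forall P s /\ ForallOrdPairs (fun a b => ~ R a b) s /\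
   forall b, List.In b L -> P b -> Exists (R b) s.
  exists s; split => //; split => // a /Hcov [b [bL [Pb Rab]]].
  have /Exists_exists [c [cs Rbc]] := Cs b bL Pb.
  by apply/Exists_exists; exists c; split => //; apply: Rtr Rbc.
elim: L {Hcov} => [|b L [s [Ps [Ds Cs]]]]; first by exists nil; do 2 (split; first by constructor).
case: (Classical_Prop.classic (P b /\ ~ Exists (R b) s)) => [[Pb nE]|H].
  exists (b :: s); split; [by constructor|split].
    constructor => //; apply/Forall_forall => c cs Rbc; apply: nE.
    by apply/Exists_exists; exists c.
  move=> c [<-|cL] Pc; first by constructor.
  by apply: Exists_cons_tl; apply: Cs.
exists s; split => //; split => // c [<-|cL] Pc; last exact: Cs.
by apply: Classical_Prop.NNPP => nE; apply: H.
Qed.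

Lemma irr_count (gT : finGroupType) (A : {group gT}) : num_irr_reps A (Nirr A).
Proof.
exists [seq existT (fun d => mx_representation algC A d) _ ('Chi_i) | i <- enum (Iirr A)].
split; last by rewrite -size_length size_map size_enum_ord.
apply: class_reps_map; first exact: enum_uniq.
- by move=> i _; apply: socle_irr.
- move=> i j _ _ /= /cfRepr_rsimP/eqP; rewrite !irrRepr; exact: irr_inj.
- move=> [d rG] /= irrG.
  have /irrP [i Hi] : cfRepr rG \in irr A.
    by apply/irr_reprP; exists (Representation rG).
  exists i; first by rewrite mem_enum.
  by apply/cfRepr_rsimP; rewrite irrRepr Hi.
Qed.
Section GrpBasics.
Variable G : Grp.
Local Notation "a * b" := (gmul a b).
Local Notation "1" := (gone G).

Lemma gmulVr (a : G) : a * ginv a = 1.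
Proof.
have e : a * ginv a = ginv (ginv a) * ginv a * (a * ginv a).
  by rewrite gmulV gmul1.
by rewrite e -gmulA (gmulA (ginv a)) gmulV gmul1 gmulV.
Qed.

Lemma gmulr1 (a : G) : a * 1 = a.
Proof. by rewrite -(gmulV a) gmulA gmulVr gmul1. Qed.

Lemma gmulKl (a b : G) : ginv a * (a * b) = b.
Proof. by rewrite gmulA gmulV gmul1. Qed.

Lemma gmulKr (a b : G) : a * (ginv a * b) = b.
Proof. by rewrite gmulA gmulVr gmul1. Qed.

Lemma gmulKl' (a b : G) : b * a * ginv a = b.
Proof. by rewrite -gmulA gmulVr gmulr1. Qed.

Lemma gmulKr' (a b : G) : b * ginv a * a = b.
Proof. by rewrite -gmulA gmulV gmulr1. Qed.

Lemma gmul_inj_l (a b c : G) : a * b = a * c -> b = c.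
Proof. by move=> e; rewrite -(gmulKl a b) e gmulKl. Qed.

Lemma ginv_uniq (a b : G) : a * b = 1 -> b = ginv a.
Proof. by move=> e; apply: (@gmul_inj_l a); rewrite e gmulVr. Qed.

Lemma ginvK (a : G) : ginv (ginv a) = a.
Proof. by symmetry; apply: ginv_uniq; rewrite gmulV. Qed.

Lemma ginvM (a b : G) : ginv (a * b) = ginv b * ginv a.
Proof.
symmetry; apply: ginv_uniq.
by rewrite -gmulA (gmulA b) gmulVr gmul1 gmulVr.
Qed.

Lemma ginv1 : ginv 1 = 1 :> G.
Proof. by symmetry; apply: ginv_uniq; rewrite gmul1. Qed.

Definition npow (x : G) (m : nat) : G := iter m (gmul x) 1.

Lemma npowS (x : G) m : npow x m.+1 = x * npow x m.
Proof. by []. Qed.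

Lemma npow_comm (x y : G) m : x * y = y * x -> npow x m * y = y * npow x m.
Proof.
move=> c; elim: m => [|m IH]; first by rewrite /npow /= gmul1 gmulr1.
by rewrite npowS -gmulA IH !gmulA c.
Qed.

Lemma npowSr (x : G) m : npow x m.+1 = npow x m * x.
Proof. by rewrite npowS npow_comm. Qed.

Lemma npowD (x : G) m l : npow x (m + l) = npow x m * npow x l.
Proof.
elim: m => [|m IH]; first by rewrite /npow /= gmul1.
by rewrite addSn npowS IH gmulA.
Qed.

Lemma gpow_posz (x : G) (m : nat) : gpow x m = npow x m.
Proof. by []. Qed.

Lemma gpow_negz (x : G) (m : nat) : gpow x (Negz m) = ginv (npow x m.+1).
Proof. by []. Qed.

Lemma gpow0 (x : G) : gpow x 0 = 1.
Proof. by []. Qed.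

Lemma gpow1 (x : G) : gpow x 1 = x.
Proof. by rewrite /gpow /= gmulr1. Qed.

Lemma gpowS1 (x : G) (k : int) : gpow x (k + 1) = gpow x k * x.
Proof.
case: k => [m|m].
  have -> : (Posz m + 1 = Posz m.+1)%R by lia.
  by rewrite !gpow_posz npowSr.
case: m => [|m].
  have -> : (Negz 0 + 1 = Posz 0)%R by rewrite NegzE; lia.
  by rewrite gpow_negz gpow0 npowSr /npow /= gmul1 gmulV.
have -> : (Negz m.+1 + 1 = Negz m)%R by rewrite !NegzE; lia.
by rewrite !gpow_negz (npowS x m.+1) ginvM gmulKr'.
Qed.
End GrpBasics.
Section GSetTheory.
Variable G : Grp.
Local Notation "a * b" := (gmul a b).
Local Notation "1" := (gone G).

Lemma gpowD_pos (x : G) (k : int) (m : nat) : gpow x (k + Posz m) = gpow x k * gpow x (Posz m).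
Proof.
elim: m => [|j IH]; first by rewrite addr0 gpow0 gmulr1.
have -> : (k + Posz j.+1 = (k + Posz j) + 1)%R by lia.
have -> : (Posz j.+1 = Posz j + 1)%R by lia.
by rewrite !gpowS1 IH gmulA.
Qed.

Lemma gpowD (x : G) (k l : int) : gpow x (k + l) = gpow x k * gpow x l.
Proof.
case: l => [m|m]; first exact: gpowD_pos.
have e : (k = (k + Negz m) + Posz m.+1)%R by rewrite NegzE; lia.
have := gpowD_pos x (k + Negz m)%R m.+1; rewrite -e => ->.
by rewrite gpow_negz gpow_posz gmulKl'.
Qed.

Lemma ginv_comm (a h : G) : a * h = h * a -> ginv a * h = h * ginv a.
Proof.
move=> c; apply: (@gmul_inj_l _ a); by rewrite gmulKr gmulA c gmulKl'.
Qed.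

Lemma gpow_comm (x h : G) (k : int) : x * h = h * x -> gpow x k * h = h * gpow x k.
Proof.
move=> c; case: k => m; first exact: npow_comm.
by rewrite gpow_negz; apply: ginv_comm; apply: npow_comm.
Qed.

Lemma conj_refl (H : G -> Prop) : conj_subgroups H H.
Proof. by exists 1 => h; rewrite ginv1 gmul1 gmulr1. Qed.

Lemma conj_sym (H K : G -> Prop) : conj_subgroups H K -> conj_subgroups K H.
Proof.
case=> g Hg; exists (ginv g) => h; rewrite Hg ginvK.
by rewrite !gmulA gmulVr gmul1 gmulKl'.
Qed.

Lemma conj_trans (H K L : G -> Prop) :
  conj_subgroups H K -> conj_subgroups K L -> conj_subgroups H L.
Proof.
case=> g Hg [g' Hg']; exists (g' * g) => h; rewrite Hg Hg' ginvM.
by rewrite !gmulA.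
Qed.

Section Iso.
Variable G0 : G -> Prop.
Lemma iso_refl (X : GSet G0) : gset_iso X X.
Proof. by exists id; split => //; exists id. Qed.

Lemma iso_sym (X Y : GSet G0) : gset_iso X Y -> gset_iso Y X.
Proof.
case=> f [[f' fK f'K] Hf]; exists f'; split; first by exists f.
move=> g o Hg; apply: (can_inj fK).
by rewrite Hf // !f'K.
Qed.

Lemma iso_trans (X Y Z : GSet G0) : gset_iso X Y -> gset_iso Y Z -> gset_iso X Z.
Proof.
case=> f [bf Hf] [f' [bf' Hf']]; exists (f' \o f); split.
  exact: bij_comp.
by move=> g o Hg /=; rewrite Hf // Hf'.
Qed.
End Iso.

Notation GS := (GSet (fun _ : G => True)).
Local Notation act X := (@gs_act G (fun _ => True) X).

Lemma gactM (X : GS) g h p : act X (g * h) p = act X g (act X h p).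
Proof. exact: gs_actM. Qed.

Lemma gact1 (X : GS) p : act X 1 p = p.
Proof. exact: gs_act1. Qed.

Lemma gact_invK (X : GS) g p : act X (ginv g) (act X g p) = p.
Proof. by rewrite -gactM gmulV gact1. Qed.

Lemma gact_Kinv (X : GS) g p : act X g (act X (ginv g) p) = p.
Proof. by rewrite -gactM gmulVr gact1. Qed.

Lemma gact_inj (X : GS) g : injective (act X g).
Proof. exact: can_inj (gact_invK g). Qed.

Unset Implicit Arguments.
Definition stab (X : GS) (p : gs_car X) : G -> Prop := fun g => act X g p = p.
Set Implicit Arguments.

Lemma stab_subgroup (X : GS) p : is_subgroup (stab X p).
Proof.
split; first exact: gact1.
split; first by move=> a b Ha Hb; rewrite /stab gactM Hb Ha.
by move=> a Ha; rewrite /stab -{1}Ha gact_invK.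
Qed.

Lemma stab_act (X : GS) p c : conj_subgroups (stab X (act X c p)) (stab X p).
Proof.
exists (ginv c) => h; rewrite /stab ginvK !gactM; split.
  by move=> ->; rewrite gact_invK.
by move=> e; apply: (@gact_inj _ (ginv c)); rewrite e gact_invK.
Qed.

Lemma stab_iso (X Y : GS) f p :
  (forall g o, f (act X g o) = act Y g (f o)) -> injective f ->
  conj_subgroups (stab X p) (stab Y (f p)).
Proof.
move=> Hf fi; exists 1 => h; rewrite ginv1 gmul1 gmulr1 /stab -Hf.
by split => [->|/fi].
Qed.

Lemma stab_index (X : GS) p n :
  gset_transitive X -> #|gs_car X| = n -> has_index (stab X p) n.
Proof.
case=> _ Htr Hn.
pose gy y := proj1_sig (cid (Htr p y)).
have gyP y : act X (gy y) p = y by rewrite /gy; case: cid => g [].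
pose e (i : 'I_n) : gs_car X := enum_val (cast_ord (esym Hn) i).
exists (fun i => gy (e i)) => g.
have key i : stab X p (ginv (gy (e i)) * g) <-> act X g p = e i.
  rewrite /stab gactM; split => [H|->]; last by have := gact_invK (gy (e i)) p; rewrite gyP.
  by rewrite -(gact_Kinv (gy (e i)) (act X g p)) H gyP.
exists (cast_ord Hn (enum_rank (act X g p))); split.
  by apply/key; rewrite /e cast_ordK enum_rankK.
move=> i /key ->; apply: val_inj => /=.
by rewrite /e enum_valK.
Qed.

Lemma conj_stab_iso (X Y : GS) p q :
  gset_transitive X -> #|gs_car Y| <= #|gs_car X| ->
  conj_subgroups (stab X p) (stab Y q) -> gset_iso X Y.
Proof.
case=> _ Htr cardXY [c Hc].
pose q' := act Y (ginv c) q.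
have Hs h : stab X p h <-> act Y h q' = q'.
  split => [/Hc e|e].
    rewrite /stab /q' in e *.
    by move: e; rewrite !gactM => /(congr1 (act Y (ginv c))); rewrite gact_invK.
  apply/Hc; rewrite /stab /q' in e *.
  by rewrite !gactM e gact_Kinv.
pose gy y := proj1_sig (cid (Htr p y)).
have gyP y : act X (gy y) p = y by rewrite /gy; case: cid => g [].
pose phi y := act Y (gy y) q'.
have phiE g : phi (act X g p) = act Y g q'.
  have : stab X p (ginv g * gy (act X g p)).
    by rewrite /stab gactM gyP gact_invK.
  by move/Hs; rewrite gactM => /(congr1 (act Y g)); rewrite gact_Kinv.
have phi_inj : injective phi.
  move=> y1 y2; rewrite -(gyP y1) -(gyP y2) !phiE => e.
  have : act Y (ginv (gy y1) * gy y2) q' = q' by rewrite gactM -e gact_invK.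
  move/Hs; rewrite /stab gactM => e2.
  by rewrite -{1}e2 gact_Kinv.
exists phi; split; first exact: inj_card_bij.
move=> g o _; rewrite -(gyP o) -gactM !phiE gactM //.
Qed.

Lemma coset_gset (H : G -> Prop) n :
  is_subgroup H -> has_index H n ->
  exists X : GS, [/\ gset_transitive X, #|gs_car X| = n &
                     exists p, conj_subgroups (stab X p) H].
Proof.
case=> H1 [HM HV] [t Ht].
pose a (g : G) (i : 'I_n) : 'I_n :=
  odflt i [pick j | `[< H (ginv (t j) * (g * t i)) >] ].
have aP g i : H (ginv (t (a g i)) * (g * t i)).
  rewrite /a; case: pickP => [j /asboolP //|none].
  have [j [Hj _]] := Ht (g * t i).
  by have := none j; rewrite (asboolT Hj).
have aU g i j : H (ginv (t j) * (g * t i)) -> a g i = j.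
  move=> Hj; have [l [_ Ul]] := Ht (g * t i).
  by rewrite -(Ul _ Hj) (Ul _ (aP g i)).
have a1 i : a 1 i = i.
  by apply: aU; rewrite gmul1 gmulV.
have aM g h i : (fun _ => True) g -> (fun _ => True) h -> a (g * h) i = a g (a h i).
  move=> _ _; apply: aU.
  have := HM _ _ (aP g (a h i)) (aP h i).
  by rewrite -!gmulA (gmulA (t (a h i))) gmulVr gmul1 !gmulA.
pose X : GS := @Build_GSet G (fun _ => True) 'I_n a a1 aM.
have [i0 [Hi0 _]] := Ht 1.
exists X; split.
- split.
    by rewrite card_ord (leq_ltn_trans (leq0n _) (ltn_ord i0)).
  move=> i j; exists (t j * ginv (t i)); split => //=.
  by apply: aU; rewrite gmulKr' gmulV.
- by rewrite card_ord.
- exists i0; exists (ginv (t i0)) => h; rewrite ginvK /stab /=.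
  split => [e|Hh]; first by have := aP h i0; rewrite e gmulA.
  by apply: aU; rewrite gmulA.
Qed.
End GSetTheory.
Section Dec.
Variables (G : Grp) (G0 : G -> Prop) (x : G).
Hypothesis Hd : direct_prod_infcyclic G0 x.
Local Notation "a * b" := (gmul a b).
Local Notation "1" := (gone G).
Notation GS := (GSet (fun _ : G => True)).
Local Notation act X := (@gs_act G (fun _ => True) X).
Local Notation rho O := (@gs_act G G0 O).

Lemma G0_1 : G0 1.
Proof. by case: Hd => [[]]. Qed.
Lemma G0_M a b : G0 a -> G0 b -> G0 (a * b).
Proof. by case: Hd => [[_ [H _]]] _; apply: H. Qed.
Lemma G0_V a : G0 a -> G0 (ginv a).
Proof. by case: Hd => [[_ [_ H]]] _; apply: H. Qed.
Lemma G0_comm h : G0 h -> h * x = x * h.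
Proof. by case: Hd => _ [H _]; apply: H. Qed.
Lemma G0_pow_comm h k : G0 h -> gpow x k * h = h * gpow x k.
Proof. by move=> Hh; apply: gpow_comm; rewrite G0_comm. Qed.

Lemma dec_ex g : exists hk : G * int, G0 hk.1 /\ g = hk.1 * gpow x hk.2.
Proof. by case: Hd => _ [_ [H _]]; have [h [k [? ?]]] := H g; exists (h, k). Qed.

Definition dec g := proj1_sig (cid (dec_ex g)).
Definition pi0 g := (dec g).1.
Definition nu g := (dec g).2.

Lemma pi0_G0 g : G0 (pi0 g).
Proof. by rewrite /pi0 /dec; case: cid => -[h k] []. Qed.

Lemma decE g : g = pi0 g * gpow x (nu g).
Proof. by rewrite /pi0 /nu /dec; case: cid => -[h k] []. Qed.

Lemma dec_uniq g h k : G0 h -> g = h * gpow x k -> pi0 g = h /\ nu g = k.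
Proof.
move=> Hh e; case: Hd => _ [_ [_ U]].
by apply: U => //; [exact: pi0_G0 | rewrite -decE].
Qed.

Lemma pi0M g h : pi0 (g * h) = pi0 g * pi0 h /\ nu (g * h) = (nu g + nu h)%R.
Proof.
apply: dec_uniq; first by apply: G0_M; apply: pi0_G0.
rewrite gpowD {1}(decE g) {1}(decE h) -!gmulA; congr (_ * _).
by rewrite !gmulA (@G0_pow_comm (pi0 h) (nu g) (pi0_G0 h)).
Qed.

Lemma pi0_G0id h : G0 h -> pi0 h = h /\ nu h = 0%R.
Proof. by move=> Hh; apply: dec_uniq => //; rewrite gpow0 gmulr1. Qed.

Lemma pi0_pow k : pi0 (gpow x k) = 1 /\ nu (gpow x k) = k.
Proof. by apply: dec_uniq; [exact: G0_1 | rewrite gmul1]. Qed.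

Lemma equiv_gen (X Y : GS) (f : gs_car X -> gs_car Y) :
  (forall h z, G0 h -> f (act X h z) = act Y h (f z)) ->
  (forall z, f (act X x z) = act Y x (f z)) ->
  forall g z, f (act X g z) = act Y g (f z).
Proof.
move=> Hh Hx.
have Hnp m z : f (act X (npow x m) z) = act Y (npow x m) (f z).
  elim: m z => [|m IH] z; first by rewrite /npow /= !gact1.
  by rewrite npowS !gactM Hx IH.
have Hinv a : (forall z, f (act X a z) = act Y a (f z)) ->
    forall z, f (act X (ginv a) z) = act Y (ginv a) (f z).
  by move=> Ha z; rewrite -{2}(gact_Kinv a z) Ha gact_invK.
have Hp k z : f (act X (gpow x k) z) = act Y (gpow x k) (f z).
  by case: k => m; [apply: Hnp | rewrite gpow_negz; apply: Hinv; apply: Hnp].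
move=> g z; rewrite (decE g) !gactM Hh; last exact: pi0_G0.
by rewrite Hp.
Qed.

Lemma rhoV (O : GSet G0) h o : G0 h -> rho O (ginv h) (rho O h o) = o.
Proof. by move=> Hh; rewrite -gs_actM ?gmulV ?gs_act1 //; apply: G0_V. Qed.

Lemma rho_inj (O : GSet G0) h : G0 h -> injective (rho O h).
Proof. by move=> Hh; apply: (can_inj (g := rho O (ginv h))) => o; apply: rhoV. Qed.

End Dec.
Section Ipow.
Variable T : finType.
Local Open Scope group_scope.
Definition ipow (s : {perm T}) (j : int) : {perm T} :=
  s ^+ `|(j %% #|{perm T}|%:Z)%Z|%N.

Lemma permT_gt0 : (0 < #|{perm T}|)%N.
Proof. by apply/card_gt0P; exists 1. Qed.

Lemma perm_expM (s : {perm T}) : s ^+ #|{perm T}| = 1.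
Proof.
rewrite -cardsT; have /dvdnP [q ->] : (#[s] %| #|[set: {perm T}]|)%N.
  by apply: cardSg; apply: subsetT.
by rewrite mulnC expgM expg_order expg1n.
Qed.

Lemma modz_abs (j : int) : (j %% #|{perm T}|%:Z)%Z = Posz `|(j %% #|{perm T}|%:Z)%Z|%N.
Proof.
rewrite gez0_abs //; apply: modz_ge0.
by rewrite eqz_nat -lt0n permT_gt0.
Qed.

Lemma ipow_nat (s : {perm T}) (m : nat) : ipow s m = s ^+ m.
Proof. by rewrite /ipow modz_nat absz_nat expg_mod // perm_expM. Qed.

Lemma ipowD (s : {perm T}) (j l : int) : ipow s (j + l)%R = ipow s j * ipow s l.
Proof.
rewrite /ipow -expgD -modzDm (modz_abs j) (modz_abs l) -PoszD modz_nat absz_nat.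
by rewrite expg_mod // perm_expM.
Qed.

Lemma ipowC (s : {perm T}) (j l : int) : ipow s j * ipow s l = ipow s l * ipow s j.
Proof. by rewrite -!ipowD addrC. Qed.

Lemma ipow_comm (s : {perm T}) (f : T -> T) (j : int) :
  (forall z, f (s z) = s (f z)) -> forall z, f (ipow s j z) = ipow s j (f z).
Proof.
move=> H; rewrite /ipow; elim: `|_|%N => [|m IH] z; first by rewrite !expg0 !perm1.
by rewrite expgSr !permM H IH.
Qed.
End Ipow.

Lemma trans_from_base (G : Grp) (X : GSet (fun _ : G => True)) b :
  (0 < #|gs_car X|)%N -> (forall p, exists g, @gs_act _ _ X g b = p) -> gset_transitive X.
Proof.
move=> c H; split => // p q.
have [g eg] := H p; have [g' eg'] := H q.
by exists (gmul g' (ginv g)); split => //; rewrite gactM -eg gact_invK.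
Qed.

Section XOa.
Variables (G : Grp) (G0 : G -> Prop) (x : G).
Hypothesis Hd : direct_prod_infcyclic G0 x.
Local Notation "a * b" := (gmul a b).
Local Notation "1" := (gone G).
Notation GS := (GSet (fun _ : G => True)).
Local Notation act X := (@gs_act G (fun _ => True) X).
Local Notation rho O := (@gs_act G G0 O).
Variable O : GSet G0.

Definition aut_fix (a : {perm gs_car O}) : {perm gs_car O} :=
  if a \in aut_set O then a else 1%g.

Lemma aut_fixP a : aut_fix a \in aut_set O.
Proof. by rewrite /aut_fix; case: ifP => // _; apply: (group1 (aut_group O)). Qed.

Lemma aut_fixE a : a \in aut_set O -> aut_fix a = a.
Proof. by rewrite /aut_fix => ->. Qed.

Lemma aut_eq a h o : a \in aut_set O -> G0 h -> a (rho O h o) = rho O h (a o).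
Proof. by rewrite inE => /asboolP H Hh; apply: H. Qed.

Variables (a : {perm gs_car O}) (k : nat).
Local Notation T := (gs_car O * 'I_k)%type.

Definition sigma_fun (p : T) : T :=
  (if p.2.+1 == k then aut_fix a p.1 else p.1, ordS p.2).

Lemma sigma_inj : injective sigma_fun.
Proof.
move=> [o i] [o' i'] e.
have ei : i = i' by apply: (@ordS_inj k); exact: (congr1 snd e).
subst i'; have := congr1 fst e; rewrite /sigma_fun /=.
by case: ifP => _ => [/perm_inj ->|->].
Qed.

Definition sigma : {perm T} := perm sigma_inj.

Lemma sigmaE p : sigma p = sigma_fun p.
Proof. exact: permE. Qed.

Definition Fh (h : G) (p : T) : T := (rho O h p.1, p.2).

Lemma sigma_Fh h p : G0 h -> Fh h (sigma p) = sigma (Fh h p).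
Proof.
move=> Hh; rewrite !sigmaE /sigma_fun /Fh /=; case: ifP => // _.
by rewrite aut_eq // aut_fixP.
Qed.

Definition xact (g : G) (p : T) : T := ipow sigma (nu Hd g) (Fh (pi0 Hd g) p).

Lemma xact1 p : xact 1 p = p.
Proof.
have [e1 e2] := pi0_G0id Hd (G0_1 Hd).
rewrite /xact e1 e2 -[0%R]/(Posz 0) ipow_nat expg0 perm1 /Fh gs_act1.
by case: p.
Qed.

Lemma xactM g h p : (fun _ => True) g -> (fun _ => True) h ->
  xact (g * h) p = xact g (xact h p).
Proof.
move=> _ _; have [e1 e2] := pi0M Hd g h.
rewrite /xact e1 e2 ipowD permM.
have -> : Fh (pi0 Hd g * pi0 Hd h) p = Fh (pi0 Hd g) (Fh (pi0 Hd h) p).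
  by rewrite /Fh /= gs_actM //; apply: pi0_G0.
rewrite (@ipow_comm _ sigma (Fh (pi0 Hd g))); last first.
  by move=> z; apply: sigma_Fh; apply: pi0_G0.
by rewrite -!permM ipowC.
Qed.

Definition XOa : GS := @Build_GSet G (fun _ => True) (T : finType) xact xact1 xactM.


Lemma XOa_G0 h p : G0 h -> act XOa h p = Fh h p.
Proof.
move=> Hh; have [e1 e2] := pi0_G0id Hd Hh.
by rewrite /= /xact e1 e2 -[0%R]/(Posz 0) ipow_nat expg0 perm1.
Qed.

Lemma XOa_pow m p : act XOa (gpow x (Posz m)) p = (sigma ^+ m)%g p.
Proof.
have [e1 e2] := pi0_pow Hd m.
rewrite /= /xact e1 e2 ipow_nat /Fh gs_act1; by case: p.
Qed.

Lemma XOa_x p : act XOa x p = sigma p.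
Proof. by rewrite -{1}(gpow1 x) XOa_pow expg1. Qed.

Lemma sigma_lt o (i : 'I_k) m : (i + m < k)%N ->
  exists2 j : 'I_k, val j = (i + m)%N & (sigma ^+ m)%g (o, i) = (o, j).
Proof.
elim: m => [|m IH] lt; first by exists i; rewrite ?addn0 ?expg0 ?perm1.
rewrite expgSr permM.
have [j ej ->] : exists2 j : 'I_k, val j = (i + m)%N & (sigma ^+ m)%g (o, i) = (o, j).
  by apply: IH; apply: leq_trans lt; rewrite addnS.
have lt' : (j.+1 < k)%N by rewrite ej -addnS.
exists (ordS j); first by rewrite /= modn_small // ej addnS.
by rewrite sigmaE /sigma_fun /= (ltn_eqF lt').
Qed.

Lemma sigma_k o (i : 'I_k) : (sigma ^+ k)%g (o, i) = (aut_fix a o, i).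
Proof.
have ik := ltn_ord i.
have e : ((k - i.+1) + 1 + i)%N = k by lia.
have -> : (sigma ^+ k = sigma ^+ ((k - i.+1) + 1 + i))%g by rewrite e.
rewrite expgD permM addn1 expgSr permM.
have lt1 : (i + (k - i.+1) < k)%N by lia.
have [j ej ->] := @sigma_lt o i (k - i.+1) lt1.
have ej1 : j.+1 = k by change (nat_of_ord j = (i + (k - i.+1))%N) in ej; lia.
rewrite sigmaE /sigma_fun /= ej1 eqxx.
have eo : val (ordS j) = 0%N by rewrite /= ej1 modnn.
have lt2 : (ordS j + i < k)%N by rewrite eo.
have [j' ej' ->] := @sigma_lt (aut_fix a o) (ordS j) i lt2.
by congr (_, _); apply: val_inj; rewrite ej' eo.
Qed.

Lemma XOa_pow_k o (i : 'I_k) : act XOa (gpow x (Posz k)) (o, i) = (aut_fix a o, i).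
Proof. by rewrite XOa_pow sigma_k. Qed.

Lemma XOa_card : #|gs_car XOa| = (#|gs_car O| * k)%N.
Proof. by rewrite card_prod card_ord. Qed.

Lemma XOa_trans : gset_transitive O -> (0 < k)%N -> gset_transitive XOa.
Proof.
case=> cO tO k0.
have [o0 _] := card_gt0P cO.
apply: (@trans_from_base _ XOa (o0, Ordinal k0)).
  by rewrite XOa_card muln_gt0 cO k0.
move=> [o i]; have [h [Hh eh]] := tO o0 o.
exists (gmul (gpow x (Posz i)) h); rewrite gactM [act XOa h _]XOa_G0 // XOa_pow /Fh /= eh.
have lt : (Ordinal k0 + i < k)%N by rewrite /= add0n.
have [j ej ->] := @sigma_lt o (Ordinal k0) i lt.
by congr (_, _); apply: val_inj; rewrite ej.
Qed.

End XOa.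
Section IsoX.
Variables (G : Grp) (G0 : G -> Prop) (x : G).
Hypothesis Hd : direct_prod_infcyclic G0 x.
Local Notation "a * b" := (gmul a b).
Local Notation "1" := (gone G).
Notation GS := (GSet (fun _ : G => True)).
Local Notation act X := (@gs_act G (fun _ => True) X).
Local Notation rho O := (@gs_act G G0 O).

Lemma XOa_conj (O : GSet G0) (a c : {perm gs_car O}) k :
  a \in aut_set O -> c \in aut_set O ->
  gset_iso (XOa Hd a k) (XOa Hd (a ^ c)%g k).
Proof.
move=> Ha Hc.
have Hac : (a ^ c)%g \in aut_set O by rewrite groupJ.
pose f (p : gs_car O * 'I_k) : gs_car O * 'I_k := (c p.1, p.2).
exists f; split.
  exists (fun p => ((c^-1)%g p.1, p.2)) => -[o i]; rewrite /f /=.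
    by rewrite permK.
  by rewrite permKV.
move=> g p _; apply: (equiv_gen Hd (X := XOa Hd a k) (Y := XOa Hd (a ^ c)%g k)) => //.
  move=> h [o i] Hh; rewrite !XOa_G0 // /Fh /f /=.
  by rewrite (aut_eq _ Hc Hh).
move=> [o i]; rewrite !XOa_x !sigmaE /sigma_fun /f /=.
case: ifP => // _; rewrite !aut_fixE //.
by rewrite conjgE !permM permK.
Qed.


Lemma XOa_half (O O' : GSet G0) (a : {perm gs_car O}) (a' : {perm gs_car O'}) k k'
  (k0 : (0 < k)%N) (f : gs_car (XOa Hd a k) -> gs_car (XOa Hd a' k')) :
  gset_transitive O -> injective f ->
  (forall g p, f (act (XOa Hd a k) g p) = act (XOa Hd a' k') g (f p)) ->
  exists (psi : gs_car O -> gs_car O') (i1 : 'I_k'),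
    [/\ injective psi, (forall h o, G0 h -> psi (rho O h o) = rho O' h (psi o)) &
        forall o, f (o, Ordinal k0) = (psi o, i1)].
Proof.
case=> cO tO finj fE.
have [o0 _] := card_gt0P cO.
pose psi o := (f (o, Ordinal k0)).1.
pose i1 := (f (o0, Ordinal k0)).2.
have key2 o : (f (o, Ordinal k0)).2 = i1.
  have [h [Hh <-]] := tO o0 o.
  have -> : ((rho O h o0, Ordinal k0) : gs_car (XOa Hd a k)) = act (XOa Hd a k) h (o0, Ordinal k0).
    by rewrite XOa_G0.
  by rewrite fE XOa_G0.
have key o : f (o, Ordinal k0) = (psi o, i1).
  by rewrite -(key2 o) /psi; case: (f _).
exists psi, i1; split; last exact: key.
- move=> o o' e; have := congr1 f (erefl (o, Ordinal k0)).
  by rewrite key => _; have := key o'; rewrite -e -key => /finj [].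
- move=> h o Hh.
  have := fE h (o, Ordinal k0); rewrite XOa_G0 // XOa_G0 // key /Fh /= key.
  by case.
Qed.

Lemma iso_inj_equiv (A B : GS) : gset_iso A B ->
  exists f : gs_car A -> gs_car B, injective f /\ forall g p, f (act A g p) = act B g (f p).
Proof.
by case=> f [bf Hf]; exists f; split; [exact: bij_inj | move=> g p; apply: Hf].
Qed.

Lemma XOa_iso_O (O O' : GSet G0) (a : {perm gs_car O}) (a' : {perm gs_car O'}) k k' :
  (0 < k)%N -> (0 < k')%N -> gset_transitive O -> gset_transitive O' ->
  gset_iso (XOa Hd a k) (XOa Hd a' k') -> gset_iso O O'.
Proof.
move=> k0 k0' tO tO' iso.
have [f [fi fE]] := iso_inj_equiv iso.
have [f' [fi' fE']] := iso_inj_equiv (iso_sym iso).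
have [psi [i1 [psii psiE _]]] := XOa_half k0 tO fi fE.
have [psi' [i1' [psii' _ _]]] := XOa_half k0' tO' fi' fE'.
exists psi; split => //; apply: inj_card_bij => //.
exact: leq_card psii'.
Qed.

Lemma XOa_iso_a (O : GSet G0) (a a' : {perm gs_car O}) k :
  (0 < k)%N -> gset_transitive O -> a \in aut_set O -> a' \in aut_set O ->
  gset_iso (XOa Hd a k) (XOa Hd a' k) -> a' \in (a ^: aut_group O)%g.
Proof.
move=> k0 tO Ha Ha' iso.
have [f [fi fE]] := iso_inj_equiv iso.
have [psi [i1 [psii psiE key]]] := XOa_half k0 tO fi fE.
pose p := perm psii.
have pA : p \in aut_set O.
  by rewrite inE; apply/asboolP => g o Hg; rewrite !permE psiE.
have comm o : psi (a o) = a' (psi o).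
  have E1 := fE (gpow x (Posz k)) (o, Ordinal k0).
  have E2 := XOa_pow_k Hd a o (Ordinal k0).
  have E3 := XOa_pow_k Hd a' (psi o) i1.
  have E4 : f (aut_fix a o, Ordinal k0) = (aut_fix a' (psi o), i1).
    by rewrite -E3 -key -E2; exact: E1.
  by move: E4; rewrite key !aut_fixE //; case.
apply/imsetP; exists p => //.
apply/permP => z; rewrite conjgE !permM.
have -> : z = p ((p^-1)%g z) by rewrite permKV.
by rewrite permK !permE comm.
Qed.

Lemma XOa_transport (O O' : GSet G0) (a : {perm gs_car O}) k :
  a \in aut_set O -> gset_iso O O' ->
  exists2 a' : {perm gs_car O'}, a' \in aut_set O' & gset_iso (XOa Hd a k) (XOa Hd a' k).
Proof.
move=> Ha [i [[i' iK i'K] iE]].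
have i'i : injective i' by apply: can_inj i'K.
have iinj : injective i by apply: can_inj iK.
pose a' := perm (inj_comp iinj (inj_comp (@perm_inj _ a) i'i)).
have a'E z : a' z = i (a (i' z)) by rewrite permE.
have i'E h z : G0 h -> i' (rho O' h z) = rho O h (i' z).
  by move=> Hh; apply: (iinj); rewrite iE // !i'K.
have Ha' : a' \in aut_set O'.
  by rewrite inE; apply/asboolP => g z Hg; rewrite !a'E i'E // (aut_eq _ Ha Hg) iE.
exists a' => //.
pose f (p : gs_car O * 'I_k) : gs_car O' * 'I_k := (i p.1, p.2).
exists f; split.
  by exists (fun p => (i' p.1, p.2)) => -[o j]; rewrite /f /= ?iK ?i'K.
move=> g p _; apply: (equiv_gen Hd (X := XOa Hd a k) (Y := XOa Hd a' k)) => //.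
  by move=> h [o j] Hh; rewrite !XOa_G0 // /Fh /f /= iE.
move=> [o j]; rewrite !XOa_x !sigmaE /sigma_fun /f /=.
by case: ifP => // _; rewrite !aut_fixE // a'E iK.
Qed.

End IsoX.
Section Orbit.
Variables (G : Grp) (G0 : G -> Prop) (x : G).
Hypothesis Hd : direct_prod_infcyclic G0 x.
Local Notation "a * b" := (gmul a b).
Local Notation "1" := (gone G).
Notation GS := (GSet (fun _ : G => True)).
Local Notation act X := (@gs_act G (fun _ => True) X).
Local Notation rho O := (@gs_act G G0 O).
Variables (Y : GS) (p0 : gs_car Y).

Definition orb (y : gs_car Y) : bool := `[< exists h, G0 h /\ act Y h p0 = y >].

Lemma orb_act h y : G0 h -> orb y -> orb (act Y h y).
Proof.
move=> Hh /asboolP [h' [Hh' <-]]; apply/asboolP; exists (h * h'); split.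
  exact: (G0_M Hd).
by rewrite gactM.
Qed.

Lemma orb_act_inv h y : G0 h -> orb (act Y h y) -> orb y.
Proof. by move=> Hh /(orb_act (G0_V Hd Hh)); rewrite gact_invK. Qed.

Lemma orb_p0 : orb p0.
Proof. by apply/asboolP; exists 1; split; [exact: (G0_1 Hd) | rewrite gact1]. Qed.

Definition Ocar := {y : gs_car Y | orb y}.

Definition oact (g : G) (z : Ocar) : Ocar :=
  exist _ (act Y (pi0 Hd g) (val z)) (orb_act (pi0_G0 Hd g) (valP z)).

Lemma oact1 z : oact 1 z = z.
Proof.
by apply: val_inj; rewrite /= (pi0_G0id Hd (G0_1 Hd)).1 gact1.
Qed.

Lemma oactM g h z : G0 g -> G0 h -> oact (g * h) z = oact g (oact h z).
Proof.
move=> Hg Hh; apply: val_inj => /=.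
by rewrite (pi0M Hd g h).1 gactM.
Qed.

Definition OY : GSet G0 := @Build_GSet G G0 _ oact oact1 oactM.

Lemma OY_val h z : G0 h -> val (rho OY h z) = act Y h (val z).
Proof. by move=> Hh; rewrite /= (pi0_G0id Hd Hh).1. Qed.

Lemma OY_trans : gset_transitive OY.
Proof.
split; first by apply/card_gt0P; exists (exist _ p0 orb_p0).
move=> [y Hy] [y' Hy'].
have /asboolP [h [Hh ey]] := Hy; have /asboolP [h' [Hh' ey']] := Hy'.
exists (h' * ginv h); split; first by apply: (G0_M Hd) => //; apply: (G0_V Hd).
apply: val_inj; rewrite OY_val /=; last by apply: (G0_M Hd) => //; apply: (G0_V Hd).
by rewrite -ey -ey' gactM gact_invK.
Qed.

End Orbit.

Section ToXOa.
Variables (G : Grp) (G0 : G -> Prop) (x : G).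
Hypothesis Hd : direct_prod_infcyclic G0 x.
Local Notation "a * b" := (gmul a b).
Local Notation "1" := (gone G).
Notation GS := (GSet (fun _ : G => True)).
Local Notation act X := (@gs_act G (fun _ => True) X).
Local Notation rho O := (@gs_act G G0 O).

Lemma gset_to_XOa (Y : GS) n : gset_transitive Y -> #|gs_car Y| = n ->
  exists (O : GSet G0) (a : {perm gs_car O}) (k : nat),
   [/\ gset_transitive O, a \in aut_set O, (#|gs_car O| * k)%N = n, (0 < k)%N &
       gset_iso Y (XOa Hd a k)].
Proof.
case=> cY tY cardY.
have [p0 _] := card_gt0P cY.
pose O := OY Hd p0.
pose px := perm (@gact_inj G Y x).
have npowE m y : act Y (npow x m) y = (px ^+ m)%g y.
  elim: m y => [|m IH] y; first by rewrite expg0 perm1 /npow /= gact1.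
  by rewrite npowS gactM IH expgSr permM permE.
have exP : exists m, (0 < m)%N && orb G0 p0 (act Y (npow x m) p0).
  exists #[px]%g; rewrite order_gt0 /= npowE expg_order perm1.
  exact: (orb_p0 Hd).
case: (ex_minnP exP) => k /andP [k0 orbk] kmin.
have npow_comm_G0 m h : G0 h -> npow x m * h = h * npow x m.
  by move=> Hh; apply: npow_comm; rewrite (G0_comm Hd Hh).
have tau_orb (z : gs_car O) : orb G0 p0 (act Y (npow x k) (val z)).
  case: z => y /= /asboolP [h [Hh <-]].
  by rewrite -gactM npow_comm_G0 // gactM; apply: (orb_act Hd).
pose tau (z : gs_car O) : gs_car O := exist (fun y => orb G0 p0 y) (act Y (npow x k) (val z)) (tau_orb z).
have tau_inj : injective tau.
  by move=> z z' /(congr1 val) /= /gact_inj /val_inj.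
pose a := perm tau_inj.
have aA : a \in aut_set O.
  rewrite inE; apply/asboolP => h z Hh; rewrite !permE; apply: val_inj.
  by rewrite /= (pi0_G0id Hd Hh).1 -!gactM npow_comm_G0.
pose X := XOa Hd a k.
pose Psi (p : gs_car X) : gs_car Y := act Y (npow x p.2) (val p.1).
have PsiE : forall g p, Psi (act X g p) = act Y g (Psi p).
  apply: (equiv_gen Hd) => [h [z i] Hh|[z i]].
    by rewrite XOa_G0 // /Fh /Psi /= (pi0_G0id Hd Hh).1 -!gactM npow_comm_G0.
  rewrite XOa_x sigmaE /sigma_fun /Psi /=.
  case: ifP => [/eqP ik|ik].
    rewrite aut_fixE // permE /= ik modnn /npow /= gact1.
    by rewrite -gactM -npowS ik.
  have ik' : (i.+1 < k)%N by rewrite ltn_neqAle ik ltn_ord.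
  by rewrite modn_small // npowS gactM.
have key (z z' : gs_car O) (i i' : nat) : (i <= i' < k)%N ->
    act Y (npow x i) (val z) = act Y (npow x i') (val z') -> i = i' /\ z = z'.
  case/andP => ii' i'k.
  have -> : i' = (i + (i' - i))%N by rewrite subnKC.
  rewrite npowD gactM => /gact_inj e.
  have d0 : (i' - i)%N = 0%N.
    apply/eqP; apply: contraT; rewrite -lt0n => dpos.
    have := kmin (i' - i)%N; rewrite dpos /=.
    have : orb G0 p0 (act Y (npow x (i' - i)) p0).
      case: z' e => y' /= /asboolP [h' [Hh' <-]] e.
      apply: (orb_act_inv Hd (h := h')) => //.
      rewrite -gactM -npow_comm_G0 // gactM -e; exact: valP.
    move=> -> /(_ isT) le; have : (i' - i < k)%N by apply: leq_ltn_trans (leq_subr _ _) i'k.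
    by rewrite ltnNge le.
  move: e; rewrite d0 addn0 /npow /= gact1 => e; split => //.
  by apply: val_inj.
have Psi_inj : injective Psi.
  move=> [z i] [z' i'] e; rewrite /Psi /= in e.
  case: (leqP i i') => c.
    have [ei ez] := key z z' i i' (introT andP (conj c (ltn_ord i'))) e.
    by rewrite ez; congr (_, _); apply: val_inj.
  have [ei ez] := key z' z i' i (introT andP (conj (ltnW c) (ltn_ord i))) (esym e).
  by rewrite ez; congr (_, _); apply: val_inj.
have Psi_surj y : exists p, Psi p = y.
  have [g [_ eg]] := tY p0 y.
  exists (act X g (exist (fun y => orb G0 p0 y) p0 (orb_p0 Hd p0), Ordinal k0)).
  by rewrite PsiE /Psi /= /npow /= gact1.
have cardXY : #|gs_car Y| <= #|gs_car X|.
  pose r y := proj1_sig (cid (Psi_surj y)).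
  have rK : cancel r Psi by move=> y; rewrite /r; case: cid.
  exact: leq_card (can_inj rK).
have bPsi : bijective Psi by apply: inj_card_bij.
exists O, a, k; split => //.
- exact: OY_trans.
- rewrite -cardY -(XOa_card Hd a k); apply/eqP; rewrite eqn_leq andbC.
  by rewrite (leq_card _ Psi_inj) cardXY.
- apply: iso_sym; exists Psi; split => // g p _; exact: PsiE.
Qed.
End ToXOa.
Section Finite.
Variables (G : Grp) (G0 : G -> Prop) (x : G).
Hypothesis Hd : direct_prod_infcyclic G0 x.
Local Notation "a * b" := (gmul a b).
Local Notation "1" := (gone G).
Local Notation rho O := (@gs_act G G0 O).

Definition dflt_gset : GSet G0 :=
  @Build_GSet G G0 unit (fun _ o => o) (fun _ => erefl) (fun _ _ _ _ _ => erefl).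

Lemma pi0V g : pi0 Hd (ginv g) = ginv (pi0 Hd g).
Proof.
have := (pi0M Hd (ginv g) g).1; rewrite gmulV (pi0_G0id Hd (G0_1 Hd)).1 => e.
by rewrite -(gmul1 (ginv (pi0 Hd g))) e gmulKl'.
Qed.

Variable S : list G.
Hypothesis HS : forall g, Defs.generated S g.
Local Notation m := (size S).

Unset Implicit Arguments.
Definition Match (d : nat) (f : {ffun 'I_m -> {ffun 'I_d -> 'I_d}}) (X : GSet G0) : Prop :=
  exists e : gs_car X -> 'I_d, bijective e /\
    forall (i : 'I_m) o, e (rho X (pi0 Hd (seq.nth 1 S i)) o) = f i (e o).

Set Implicit Arguments.
Lemma match_iso d f X1 X2 : Match d f X1 -> Match d f X2 -> gset_iso X1 X2.
Proof.
case=> e1 [[e1' e1K e1'K] H1] [e2 [[e2' e2K e2'K] H2]].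
pose phi o := e2' (e1 o).
have phi_bij : bijective phi.
  by exists (fun o => e1' (e2 o)) => o; rewrite /phi ?e2'K ?e1K ?e1'K ?e2K.
suff key : forall g, Defs.generated S g -> forall o,
    phi (rho X1 (pi0 Hd g) o) = rho X2 (pi0 Hd g) (phi o).
  exists phi; split => // h o Hh.
  by have := key h (HS h) o; rewrite (pi0_G0id Hd Hh).1.
move=> g; elim => [|s sS|a b _ IHa _ IHb|a _ IHa] o.
- by rewrite (pi0_G0id Hd (G0_1 Hd)).1 !gs_act1.
- have [i ei] : exists i : 'I_m, seq.nth 1 S i = s.
    have [j [jl ej]] := In_nth S s 1 sS.
    have jm : (j < m)%N by rewrite size_length; apply/ssrnat.ltP.
    exists (Ordinal jm); rewrite -ej /=.
    by clear; elim: S j => [|y S' IH] [|j] //=.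
  by apply: (can_inj e2K); rewrite /phi e2'K -ei H1 H2 e2'K.
- rewrite (pi0M Hd a b).1 !gs_actM; try exact: pi0_G0.
  by rewrite IHa IHb.
- rewrite pi0V.
  have Hp := pi0_G0 Hd a.
  have rKV (O : GSet G0) h z : G0 h -> rho O h (rho O (ginv h) z) = z.
    by move=> Hh; rewrite -gs_actM ?gmulVr ?gs_act1 //; apply: (G0_V Hd).
  apply: (rho_inj Hd (O := X2) Hp).
  by rewrite -IHa !rKV.
Qed.

Variable n : nat.
Definition PX (X : GSet G0) : Prop := gset_transitive X /\ (#|gs_car X| %| n)%N.

Definition cand d (f : {ffun 'I_m -> {ffun 'I_d -> 'I_d}}) : GSet G0 :=
  match pselect (exists X, PX X /\ Match d f X) with
  | left H => proj1_sig (cid H)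
  | right _ => dflt_gset
  end.

Lemma Os_exist : (0 < n)%N -> exists Os, class_reps PX (@gset_iso G G0) Os.
Proof.
move=> n0.
pose L := flat_map (fun d => List.map (@cand d) (enum {ffun 'I_m -> {ffun 'I_d -> 'I_d}}))
                   (iota 0 n.+1).
apply: (@class_reps_exist _ _ _ L).
- exact: iso_refl.
- exact: iso_trans.
move=> Y PY.
pose d := #|gs_car Y|.
pose e : gs_car Y -> 'I_d := enum_rank.
pose f : {ffun 'I_m -> {ffun 'I_d -> 'I_d}} :=
  [ffun i : 'I_m => [ffun j : 'I_d => e (rho Y (pi0 Hd (seq.nth 1 S i)) (enum_val j))]].
have MY : Match d f Y.
  exists e; split; first by exists enum_val; [exact: enum_rankK | exact: enum_valK].
  by move=> i o; rewrite !ffunE /e enum_rankK.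
have [X [PX' MX] eX] : exists2 X, PX X /\ Match d f X & cand f = X.
  rewrite /cand; case: pselect => [H|nH]; last by exfalso; apply: nH; exists Y.
  by exists (proj1_sig (cid H)) => //; case: cid.
exists X; split; last by split => //; apply: match_iso MY MX.
apply/in_flat_map; exists d; split.
  apply/In_mem; rewrite mem_iota /= add0n ltnS.
  by apply: dvdn_leq => //; case: PY.
by rewrite -eX; apply: in_map; apply/In_mem; rewrite mem_enum.
Qed.

End Finite.
Lemma nth_In_seq (T : Type) (x0 : T) (s : list T) j :
  (j < size s)%N -> List.In (seq.nth x0 s j) s.
Proof.
elim: s j => [|a s IH] [|j] //= lt; first by left.
by right; apply: IH.
Qed.

Lemma In_nth_seq (T : Type) (x0 : T) (s : list T) y :
  List.In y s -> exists2 j, (j < size s)%N & seq.nth x0 s j = y.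
Proof.
elim: s => [|a s IH] //= [->|/IH [j lt ej]]; first by exists 0%N.
by exists j.+1.
Qed.

Lemma FOP_nth (T : Type) (Q : T -> T -> Prop) (x0 : T) (s : list T) i j :
  ForallOrdPairs Q s -> (i < j)%N -> (j < size s)%N ->
  Q (seq.nth x0 s i) (seq.nth x0 s j).
Proof.
elim: s i j => [|a s IH] i j //= H; inversion H; subst.
case: j => [|j]; first by rewrite ltn0.
case: i => [|i] /= ij lt.
  by move/Forall_forall: H2; apply; apply: nth_In_seq.
by apply: IH.
Qed.

Lemma Forall2_map (A B : Type) (P : A -> B -> Prop) (g : A -> B) (s : list A) :
  (forall a, P a (g a)) -> Forall2 P s (List.map g s).
Proof. by move=> H; elim: s => [|a s IH] /=; constructor. Qed.

Section Main.
Variables (G : Grp) (G0 : G -> Prop) (x : G).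
Hypothesis Hd : direct_prod_infcyclic G0 x.
Local Notation "a * b" := (gmul a b).
Local Notation "1" := (gone G).
Notation GS := (GSet (fun _ : G => True)).
Local Notation act X := (@gs_act G (fun _ => True) X).
Local Notation rho O := (@gs_act G G0 O).

Unset Implicit Arguments.
Definition stab0 (X : GS) : G -> Prop := fun g =>
  match [pick z : gs_car X] with Some z => stab G X z g | None => True end.
Set Implicit Arguments.

Lemma stab0E (X : GS) : (0 < #|gs_car X|)%N -> exists z, stab0 X = stab G X z.
Proof.
move=> c; rewrite /stab0; case: pickP => [z _|none]; first by exists z.
by have [z _] := card_gt0P c; have := none z.
Qed.

Lemma main_count n (S : list G) (HS : forall g, Defs.generated S g) : (0 < n)%N ->
  exists N, num_conj_classes_index G n N /\ num_pairs G0 n N.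
Proof.
move=> n0.
have [Os [OsP [OsD OsC]]] := Os_exist Hd HS n0.
pose Oj j := seq.nth (dflt_gset G0) Os j.
pose cls j := enum (classes (aut_group (Oj j))).
pose c j := size (cls j).
pose kk j := (n %/ #|gs_car (Oj j)|)%N.
pose b j r : {perm gs_car (Oj j)} := repr (seq.nth set0 (cls j) r).
pose XX j r := XOa Hd (b j r) (kk j).
pose f (p : nat * nat) := stab0 (XX p.1 p.2).
pose l := [seq (j, r) | j <- iota 0 (size Os), r <- iota 0 (c j)].
have OjP j : (j < size Os)%N -> PX n (Oj j).
  by move=> lt; move/Forall_forall: OsP; apply; apply: nth_In_seq.
have kk_card j : (j < size Os)%N -> (#|gs_car (Oj j)| * kk j)%N = n.
  by move=> /OjP [_ dv]; rewrite mulnC divnK.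
have card_pos j : (j < size Os)%N -> (0 < #|gs_car (Oj j)|)%N.
  by move=> /OjP [[] ].
have kk_pos j : (j < size Os)%N -> (0 < kk j)%N.
  move=> lt; have := kk_card j lt; have := card_pos j lt.
  by case: (kk j) => // ; rewrite muln0 => _ e; rewrite -e in n0.
have b_in j r : (r < c j)%N -> b j r \in aut_set (Oj j).
  move=> lt; have : seq.nth set0 (cls j) r \in classes (aut_group (Oj j)).
    by rewrite -mem_enum; apply: mem_nth.
  by case/repr_classesP.
have XX_trans j r : (j < size Os)%N -> gset_transitive (XX j r).
  by move=> lt; apply: XOa_trans; [case: (OjP j lt) | exact: kk_pos].
have XX_card j r : (j < size Os)%N -> #|gs_car (XX j r)| = n.
  by move=> lt; rewrite XOa_card kk_card.
have meml j r : ((j, r) \in l) = (j < size Os)%N && (r < c j)%N.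
  apply/allpairsPdep/andP => [[j' [r' [jin rin [-> ->]]]]|[jl rl]].
    by move: jin rin; rewrite !mem_iota !add0n.
  by exists j, r; rewrite !mem_iota !add0n.
have fstab j r : (j < size Os)%N -> exists z, f (j, r) = stab G (XX j r) z.
  by move=> lt; apply: stab0E; rewrite XX_card.
exists (size l); split.
  exists (List.map f l); split; last by rewrite List.length_map -size_length.
  apply: class_reps_map.
  - apply: allpairs_uniq_dep; first exact: iota_uniq.
      by move=> j _; apply: iota_uniq.
    by move=> [j1 r1] [j2 r2] _ _ /= [e1 e2]; subst.
  - move=> [j r]; rewrite meml => /andP [jl rl].
    have [z ->] := fstab j r jl; split; first exact: stab_subgroup.
    by apply: stab_index; [exact: XX_trans | exact: XX_card].
  - move=> [j1 r1] [j2 r2]; rewrite !meml => /andP [jl1 rl1] /andP [jl2 rl2].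
    have [z1 ->] := fstab j1 r1 jl1; have [z2 ->] := fstab j2 r2 jl2 => cj.
    have iso := conj_stab_iso (XX_trans j1 r1 jl1) (eq_leq (etrans (XX_card j2 r2 jl2)
                   (esym (XX_card j1 r1 jl1)))) cj.
    have isoO := XOa_iso_O (kk_pos j1 jl1) (kk_pos j2 jl2) (OjP j1 jl1).1 (OjP j2 jl2).1 iso.
    have ej : j1 = j2.
      case: (ltngtP j1 j2) => // lt.
        by have := FOP_nth (dflt_gset G0) OsD lt jl2.
      have := FOP_nth (dflt_gset G0) OsD lt jl1.
      by move=> /(_ (iso_sym isoO)).
    subst j2.
    have ba := XOa_iso_a (kk_pos j1 jl1) (OjP j1 jl1).1 (b_in j1 r1 rl1) (b_in j1 r2 rl2) iso.
    have Cin r : (r < c j1)%N -> seq.nth set0 (cls j1) r \in classes (aut_group (Oj j1)).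
      by move=> lt; rewrite -mem_enum; apply: mem_nth.
    have eC : seq.nth set0 (cls j1) r1 = seq.nth set0 (cls j1) r2.
      have /repr_classesP [_ e1] := Cin r1 rl1.
      have /repr_classesP [_ e2] := Cin r2 rl2.
      by rewrite e1 e2; apply/esym/class_eqP.
    congr (_, _); apply/eqP; rewrite -(nth_uniq set0 rl1 rl2) ?eC //.
    exact: enum_uniq.
  - move=> H [Hsub Hind].
    have [Y [tY cY [p cp]]] := coset_gset Hsub Hind.
    have [O [a [k [tO aA cOk k0 isoY]]]] := gset_to_XOa Hd tY cY.
    have PO : PX n O by split => //; rewrite -cOk dvdn_mulr.
    have /Exists_exists [O' [O'in isoO]] := OsC O PO.
    have [j jl ej] := In_nth_seq (dflt_gset G0) O'in.
    have isoOj : gset_iso O (Oj j) by rewrite /Oj ej.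
    have [a' a'A iso2] := XOa_transport Hd k aA isoOj.
    have ek : k = kk j.
      have [phi [bphi _]] := isoOj.
      rewrite /kk -(bij_eq_card bphi) -cOk mulKn //.
      by case: tO.
    subst k.
    pose C := (a' ^: aut_group (Oj j))%g.
    have CC : C \in classes (aut_group (Oj j)) by apply: mem_classes.
    pose r := index C (cls j).
    have rl : (r < c j)%N by rewrite index_mem mem_enum.
    have eC : seq.nth set0 (cls j) r = C by rewrite nth_index // mem_enum.
    have : b j r \in C by rewrite /b eC; exact: (mem_repr_classes CC).
    case/imsetP => c0 c0A ebr.
    have iso3 : gset_iso (XOa Hd a' (kk j)) (XX j r).
      by rewrite /XX ebr; apply: XOa_conj.
    have isoYX := iso_trans isoY (iso_trans iso2 iso3).
    exists (j, r); first by rewrite meml jl.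
    have [z ->] := fstab j r jl.
    have [phi [phii phiE]] := iso_inj_equiv isoYX.
    have [g [_ eg]] := (XX_trans j r jl).2 z (phi p).
    apply: conj_trans (conj_sym cp) _.
    apply: conj_trans (stab_iso p phiE phii) _.
    by rewrite -eg; apply: stab_act.
exists Os, (List.map (fun O => Nirr (aut_group O)) Os); split => //; split.
  by apply: Forall2_map => O; apply: irr_count.
have mapE (A B : Type) (g : A -> B) (s : list A) : List.map g s = seq.map g s.
  by elim: s => //= a s' ->.
rewrite mapE size_allpairs_dep -{1}(mkseq_nth (dflt_gset G0) Os) /mkseq -map_comp.
congr sumn; apply: eq_map => j /=.
by rewrite NirrE size_iota /c /cls -cardE.
Qed.

End Main.

Theorem proposition9p5 (G : Grp) (G0 : G -> Prop) (x : G) :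
  finitely_generated G ->
  direct_prod_infcyclic G0 x ->
  forall n : nat, (1 <= n)%N ->
    exists N : nat, num_conj_classes_index G n N /\ num_pairs G0 n N.
Proof.
move=> [S HS] Hd n n1.
exact: (main_count Hd HS n1).
Qed.
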